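(* The multiplication map $m:\Omega^1_{\mathcal D}(\mathcal A)\otimes_{\mathcal A}\Omega^1_{\mathcal D}(\mathcal A)\to\Omega^2_{\mathcal D}(\mathcal A)$ is surjective and satisfies, for all $a_i,b_i\in\mathcal A$, $$m\Big(\sum_{i=1}^3 e_ia_i\otimes\sum_{j=1}^3 e_jb_j\Big)=\sum_{1\le i<j\le 3}e_{ij}(a_ib_j-a_jb_i).$$
   Context: Let $\mathcal O_3$ be the Cuntz algebra with three generators: the universal C*-algebra generated by $S_1,S_2,S_3$ with $S_i^*S_i=1$ ($i=1,2,3$) and $\sum_{j=1}^3 S_jS_j^*=1$. Let $\mathcal A$ be the unital $*$-subalgebra of $\mathcal O_3$ generated (algebraically) by $S_1,S_2,S_3$ (the paper denotes it also by $\mathcal O_3$). For $A=(a_{ij})\in SO(3)$, $\alpha_A(S_i)=\sum_j a_{ij}S_j$ defines an automorphism; differentiating along the one-parameter subgroups $\exp(\theta X_k)$ of $SO(3)$ gives three $*$-derivations $\partial_1,\partial_2,\partial_3$ of $\mathcal A$, determined by $\partial_1S_1=0,\ \partial_1S_2=-S_3,\ \partial_1S_3=S_2$; $\partial_2S_1=-S_3,\ \partial_2S_2=0,\ \partial_2S_3=S_1$; $\partial_3S_1=S_2,\ \partial_3S_2=-S_1,\ \partial_3S_3=0$. They satisfy $[\partial_1,\partial_2]=-\partial_3$, $[\partial_2,\partial_3]=\partial_1$, $[\partial_1,\partial_3]=-\partial_2$. Let $\tau$ be the unique (faithful) KMS state of $\mathcal O_3$, $\mathcal H=L^2(\mathcal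 O_3,\tau)\otimes\mathbb C^N$, $\pi(a)=a\otimes I$ (left multiplication), and $\mathcal D=\sum_{i=1}^3\partial_i\otimes\sigma_i$, where $\sigma_1,\sigma_2,\sigma_3\in M_N(\mathbb C)$ satisfy $\sigma_i^2=I$, $\sigma_i\sigma_j=-\sigma_j\sigma_i$ ($i\neq j$), and both $\{\sigma_1,\sigma_2,\sigma_3\}$ and $\{I,\sigma_1\sigma_2,\sigma_1\sigma_3,\sigma_2\sigma_3\}$ are linearly independent (e.g. the $2\times 2$ Pauli matrices). Then $[\mathcal D,\pi(a)]=\sum_i\partial_i(a)\otimes\sigma_i$. Let $(\Omega^\bullet(\mathcal A),\delta)$ be the universal differential algebra of $\mathcal A$ and $\Pi(a_0\delta a_1\cdots\delta a_k)=\pi(a_0)[\mathcal D,\pi(a_1)]\cdots[\mathcal D,\pi(a_k)]$. With $J_0^k=\ker\Pi\cap\Omega^k(\mathcal A)$, the Connes space of $k$-forms is $\Omega^k_{\mathcal D}(\mathcal A)=\Pi(\Omega^k(\mathcal A))/\Pi(\delta J_0^{k-1})$. The multiplication $m$ sends (class of $\Pi(\omega)$)$\otimes$(class of $\Pi(\eta)$) to the class of $\Pi(\omega\eta)$. It is known that $\Omega^1_{\mathcal D}(\mathcal A)$ is free with basis $e_i=1\otimes\sigma_i$ ($i=1,2,3$), with $ae_i=e_ia$ for $a\in\mathcal A$, and $\Omega^2_{\mathcal D}(\mathcal A)$ is free with basis $e_{ij}$ = class of $1\otimes\sigma_i\sigma_j$ ($i<j$). *)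

(* Defs.v *)
From HB Require Import structures.
From mathcomp Require Import all_boot all_order all_algebra all_field.
Set Implicit Arguments. Unset Strict Implicit. Unset Printing Implicit Defensive.
Import Order.TTheory GRing.Theory Num.Theory.
Local Open Scope ring_scope.

(* The algebraic Cuntz algebra A (the unital *-subalgebra of O_3       *)
(* generated by S_1,S_2,S_3): a complex algebra with a conjugate-linear *)
(* anti-multiplicative involution [star], generated as an algebra by   *)
(* the S_i and star S_i, subject to the Cuntz relations.  Indices      *)
(* 1,2,3 of the paper are 0,1,2 here.                                  *)
Definition cuntz_star_algebra (A : algType algC) (star : A -> A)
    (S : 'I_3 -> A) : Prop :=
  [/\ [/\ (forall a, star (star a) = a),
      (forall a b, star (a + b) = star a + star b),
      (forall (c : algC) a, star (c *: a) = (Num.conj c) *: star a)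
    & (forall a b, star (a * b) = star b * star a)],
      (forall i j : 'I_3, star (S i) * S j = (i == j)%:R),
      \sum_(j < 3) S j * star (S j) = 1
    &
      forall P : A -> Prop,
        P 1 ->
        (forall i, P (S i)) -> (forall i, P (star (S i))) ->
        (forall a b, P a -> P b -> P (a + b)) ->
        (forall a b, P a -> P b -> P (a * b)) ->
        (forall (c : algC) a, P a -> P (c *: a)) ->
        forall a, P a].

Definition cuntz_derivations (A : algType algC) (star : A -> A)
    (S : 'I_3 -> A) (d : 'I_3 -> A -> A) : Prop :=
  [/\ [/\ (forall k (c : algC) a b, d k (c *: a + b) = c *: d k a + d k b),
      (forall k a b, d k (a * b) = d k a * b + a * d k b)
    & (forall k a, d k (star a) = star (d k a))],
      [/\ d 0 (S 0) = 0, d 0 (S 1) = - S 2 & d 0 (S 2) = S 1],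
      [/\ d 1 (S 0) = - S 2, d 1 (S 1) = 0 & d 1 (S 2) = S 0]
    &
      [/\ d 2 (S 0) = S 1, d 2 (S 1) = - S 0 & d 2 (S 2) = 0]].

Definition clifford_triple (N : nat) (sigma : 'I_3 -> 'M[algC]_N) : Prop :=
  [/\ (forall i, sigma i *m sigma i = 1%:M),
      (forall i j, i != j -> sigma i *m sigma j = - (sigma j *m sigma i)),
      (forall c : 'I_3 -> algC,
          \sum_(i < 3) c i *: sigma i = 0 -> forall i, c i = 0)
    & (forall c0 c1 c2 c3 : algC,
          c0 *: 1%:M + c1 *: (sigma 0 *m sigma 1) + c2 *: (sigma 0 *m sigma 2)
            + c3 *: (sigma 1 *m sigma 2) = 0 ->
          [/\ c0 = 0, c1 = 0, c2 = 0 & c3 = 0])].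

Section ConnesForms.
Variables (A : algType algC) (N : nat) (d : 'I_3 -> A -> A)
          (sigma : 'I_3 -> 'M[algC]_N).

(* A (x) M_N(C) is modelled as M_N(A); a (x) X is a%:M *m X. *)
Definition sig_hat (i : 'I_3) : 'M[A]_N := map_mx (fun c : algC => c%:A) (sigma i).

(* [D, pi(a)] = sum_i d_i(a) (x) sigma_i *)
Definition commD (a : A) : 'M[A]_N := \sum_(i < 3) (d i a)%:M *m sig_hat i.

(* Universal forms, as formal finite sums:
   a 1-form  sum a0 da1        is a  seq (A * A),
   a 2-form  sum a0 da1 da2    is a  seq (A * A * A) (= ((a0,a1),a2)). *)
Definition Pi1 (x : A * A) : 'M[A]_N := (x.1)%:M *m commD x.2.
Definition Pi2 (x : A * A * A) : 'M[A]_N :=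
  (x.1.1)%:M *m commD x.1.2 *m commD x.2.
Definition PiF1 (w : seq (A * A)) : 'M[A]_N := \sum_(x <- w) Pi1 x.
Definition PiF2 (w : seq (A * A * A)) : 'M[A]_N := \sum_(x <- w) Pi2 x.

(* delta (a0 da1) = 1 da0 da1 *)
Definition delta1 (w : seq (A * A)) : seq (A * A * A) :=
  [seq (1, x.1, x.2) | x <- w].

(* product in the universal algebra:
   (a0 da1)(b0 db1) = a0 d(a1 b0) db1 - a0 a1 db0 db1 *)
Definition mul1 (w v : seq (A * A)) : seq (A * A * A) :=
  flatten [seq flatten [seq [:: (x.1, x.2 * y.1, y.2); (- (x.1 * x.2), y.1, y.2)]
                       | y <- v] | x <- w].

(* Junk in degree 2: Pi(delta J_0^1), J_0^1 = ker Pi on 1-forms.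
   Two elements of Pi(Omega^2) have the same class in Omega^2_D iff
   their difference is junk2. *)
Definition junk2 (M : 'M[A]_N) : Prop :=
  exists w : seq (A * A), PiF1 w = 0 /\ M = PiF2 (delta1 w).

End ConnesForms.

(* Main.v *)
Require Import Defs.
From HB Require Import structures.
From mathcomp Require Import all_boot all_order all_algebra all_field.
From mathcomp Require Import ring.
Import Order.TTheory GRing.Theory Num.Theory.
Local Open Scope ring_scope.

Lemma sum3 (V:zmodType) (F : 'I_3 -> V) : \sum_(i<3) F i = F 0 + F 1 + F 2.
Proof. rewrite !big_ord_recl big_ord0 addr0 addrA. do 3 f_equal; exact/val_inj. Qed.

Lemma zmod9 (V : zmodType) (p0 p1 p2 q01 q02 q12 r10 r20 r21 : V) :
 p0 + q01 + q02 + (- r10 + p1 + q12) + (- r20 - r21 + p2) - ((q01 - r10) + (q02 - r20) + (q12 - r21)) = p0 + p1 + p2.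
Proof.
rewrite [LHS](AC (((3*3)*3)*1) ((1*5*9)*(((2*4)*(3*7)*(6*8))*10))) /=.
by rewrite subrr addr0.
Qed.

Section Aux.
Variables (A : algType algC) (N : nat) (d : 'I_3 -> A -> A)
          (sigma : 'I_3 -> 'M[algC]_N).
Local Notation E := (@sig_hat A N sigma).
Local Notation cD := (commD d sigma).

Lemma E_comm i (c : A) : E i *m c%:M = c%:M *m E i.
Proof.
apply/matrixP=> k l; rewrite !mxE.
rewrite (bigD1 l) //= big1 => [|m /negbTE ml]; last by rewrite !mxE ml mulr0n mulr0.
rewrite (bigD1 k) //= big1 => [|m /negbTE ml]; last by rewrite !mxE eq_sym ml mulr0n mul0r.
by rewrite !mxE !eqxx !mulr1n !addr0 /= mulr_algl mulr_algr.
Qed.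

Lemma sc_prod (x y : A) k l :
  (x%:M *m E k) *m (y%:M *m E l) = (x * y)%:M *m (E k *m E l).
Proof. by rewrite mulmxA -(mulmxA _ (E k)) E_comm !mulmxA scalar_mxM. Qed.

Lemma sc_cD (y x : A) : y%:M *m cD x = \sum_k (y * d k x)%:M *m E k.
Proof. rewrite /commD mulmx_sumr; apply: eq_bigr => k _. by rewrite mulmxA scalar_mxM. Qed.

Hypothesis dlin : forall k (c : algC) a b, d k (c *: a + b) = c *: d k a + d k b.
Hypothesis dmul : forall k a b, d k (a * b) = d k a * b + a * d k b.

Lemma dD k a b : d k (a + b) = d k a + d k b.
Proof. by rewrite -(scale1r a) dlin !scale1r. Qed.
Lemma d0 k : d k 0 = 0.
Proof. by apply: (addrI (d k 0)); rewrite -dD !addr0. Qed.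
Lemma dZ k c a : d k (c *: a) = c *: d k a.
Proof. by rewrite -(addr0 (c *: a)) dlin d0 addr0. Qed.
Lemma dN k a : d k (- a) = - d k a.
Proof. by rewrite -scaleN1r dZ scaleN1r. Qed.
Lemma d1 k : d k 1 = 0.
Proof. by apply: (addrI (d k 1)); rewrite addr0 -{3}(mulr1 1) dmul mulr1 mul1r. Qed.

Lemma cD1 : cD 1 = 0.
Proof. by rewrite /commD big1 // => k _; rewrite d1 raddf0 mul0mx. Qed.

Lemma cD_mul a b : cD (a * b) = cD a *m b%:M + a%:M *m cD b.
Proof.
rewrite /commD mulmx_suml mulmx_sumr -big_split /=; apply: eq_bigr => k _.
by rewrite dmul raddfD /= mulmxDl !scalar_mxM -!mulmxA E_comm.
Qed.

Lemma pair_lem x y :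
  Pi2 d sigma (x.1, x.2 * y.1, y.2) + Pi2 d sigma (- (x.1 * x.2), y.1, y.2)
  = Pi1 d sigma x *m Pi1 d sigma y.
Proof.
rewrite /Pi2 /Pi1 /= cD_mul mulmxDr mulmxDl raddfN /= !mulNmx scalar_mxM !mulmxA.
by rewrite addrK.
Qed.

Lemma PiF2_mul1 w v : PiF2 d sigma (mul1 w v) = PiF1 d sigma w *m PiF1 d sigma v.
Proof.
elim: w => [|x w IH]; first by rewrite /PiF2 /PiF1 /mul1 /= !big_nil mul0mx.
rewrite /mul1 /= -/(mul1 w v) /PiF2 big_cat /= -/(PiF2 d sigma (mul1 w v)) IH.
rewrite /PiF1 big_cons mulmxDl; congr (_ + _); clear IH.
elim: v => [|y v IHv] /=; first by rewrite !big_nil mulmx0.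
by rewrite !big_cons IHv addrA mulmxDr pair_lem.
Qed.


Lemma E_sq (sc : clifford_triple sigma) i : E i *m E i = 1%:M.
Proof.
case: sc => sq _ _ _.
have -> : E i = map_mx (in_alg A) (sigma i) by [].
by rewrite -map_mxM sq map_scalar_mx rmorph1.
Qed.

Lemma E_anti (sc : clifford_triple sigma) i j : i != j -> E i *m E j = - (E j *m E i).
Proof.
case: sc => _ an _ _ ij.
have eE : forall k, E k = map_mx (in_alg A) (sigma k) by [].
by rewrite !eE -!map_mxM an // map_mxN.
Qed.

Variables (star : A -> A) (S : 'I_3 -> A).
Hypothesis starS : forall i j : 'I_3, star (S i) * S j = (i == j)%:R.
Hypothesis starD : forall a b, star (a + b) = star a + star b.
Hypothesis starZ : forall (c : algC) a, star (c *: a) = (Num.conj c) *: star a.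
Hypothesis dstar : forall k a, d k (star a) = star (d k a).
Hypothesis dS0 : [/\ d 0 (S 0) = 0, d 0 (S 1) = - S 2 & d 0 (S 2) = S 1].
Hypothesis dS1 : [/\ d 1 (S 0) = - S 2, d 1 (S 1) = 0 & d 1 (S 2) = S 0].
Hypothesis dS2 : [/\ d 2 (S 0) = S 1, d 2 (S 1) = - S 0 & d 2 (S 2) = 0].

Lemma star0 : star 0 = 0.
Proof. by apply: (addrI (star 0)); rewrite -starD !addr0. Qed.
Lemma starN a : star (- a) = - star a.
Proof. by rewrite -scaleN1r starZ rmorphN1 scaleN1r. Qed.

Lemma ord3 (j : 'I_3) : j = 0 \/ j = 1 \/ j = 2.
Proof.
case: j => [[|[|[|//]]] Hj]; [left|right;left|right;right]; exact/val_inj.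
Qed.

Lemma sc0 (M : 'M[A]_N) : (0 : A)%:M *m M = 0.
Proof. by rewrite mul_scalar_mx scale0r. Qed.

Lemma Sker j : (star (S j))%:M *m cD (S j) = 0.
Proof.
case: dS0 => a0 a1 a2; case: dS1 => b0 b1 b2; case: dS2 => c0 c1 c2.
rewrite sc_cD sum3.
have [->|[->|->]] := ord3 j;
  rewrite ?a0 ?a1 ?a2 ?b0 ?b1 ?b2 ?c0 ?c1 ?c2 ?mulr0 ?mulrN !starS /= ?oppr0 ?sc0 ?addr0 //.
Qed.

Lemma Qlem (sc : clifford_triple sigma) j :
  cD (star (S j)) *m cD (S j) = 1%:M + 1%:M.
Proof.
case: dS0 => a0 a1 a2; case: dS1 => b0 b1 b2; case: dS2 => c0 c1 c2.
rewrite {1}/commD mulmx_suml sum3 !mulmx_sumr !sum3 !sc_prod !dstar.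
have [->|[->|->]] := ord3 j;
  rewrite ?a0 ?a1 ?a2 ?b0 ?b1 ?b2 ?c0 ?c1 ?c2 ?star0 ?starN ?mulr0 ?mul0r ?mulrN ?mulNr ?opprK !starS /=;
  rewrite ?oppr0 ?sc0 ?add0r ?addr0 ?mul1mx ?E_sq //.
Qed.


Lemma scD (a b : A) : (a + b)%:M = a%:M + b%:M :> 'M[A]_N.
Proof. exact: raddfD. Qed.

Lemma scN (a : A) : (- a)%:M = - a%:M :> 'M[A]_N.
Proof. exact: raddfN. Qed.

Lemma junk_sc (sc : clifford_triple sigma) c : junk2 d sigma c%:M.
Proof.
pose c' := (6^-1 : algC) *: c.
exists [:: (c' * star (S 0), S 0); (c' * star (S 1), S 1); (c' * star (S 2), S 2)]; split.
  by rewrite /PiF1 !big_cons big_nil /Pi1 /= !scalar_mxM -!mulmxA !Sker !mulmx0 !addr0.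
rewrite /PiF2 /delta1 /= !big_cons big_nil /Pi2 /= !mul1mx !cD_mul !mulmxDl -!mulmxA.
rewrite !Sker !mulmx0 !add0r !(Qlem sc) addr0.
rewrite -!scD -!scalar_mxM -!scD; congr (_%:M).
rewrite /c' !mulrDr !mulr1 -!scalerDl.
have -> : (6^-1 + 6^-1 + (6^-1 + 6^-1 + (6^-1 + 6^-1)) : algC) = 1 by field.
by rewrite scale1r.
Qed.


Lemma part2_alg (sc : clifford_triple sigma) (a b : 'I_3 -> A) :
  (\sum_(i < 3) (a i)%:M *m E i) *m (\sum_(j < 3) (b j)%:M *m E j)
  - \sum_(i < 3) \sum_(j < 3 | (i < j)%N)
            (a i * b j - a j * b i)%:M *m (E i *m E j)
  = (\sum_(i < 3) a i * b i)%:M.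
Proof.
rewrite mulmx_suml sum3 !mulmx_sumr !sum3 !sc_prod.
rewrite big_mkcond sum3 /= big_mkcond sum3 /= big_mkcond sum3 /=.
have e10 : E 1 *m E 0 = - (E 0 *m E 1) by apply: E_anti.
have e20 : E 2 *m E 0 = - (E 0 *m E 2) by apply: E_anti.
have e21 : E 2 *m E 1 = - (E 1 *m E 2) by apply: E_anti.
rewrite !(E_sq sc) e10 e20 e21 !mulmx1 !mulmxN !add0r !addr0 !scD.
rewrite !scN !mulmxDl !mulNmx.
exact: zmod9.
Qed.
End Aux.

Theorem mainTheorem3 (A : algType algC) (star : A -> A) (S : 'I_3 -> A)
    (d : 'I_3 -> A -> A) (N : nat) (sigma : 'I_3 -> 'M[algC]_N) :
  cuntz_star_algebra star S ->
  cuntz_derivations star S d ->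
  clifford_triple sigma ->
  (forall th : seq (A * A * A),
     exists p : seq (seq (A * A) * seq (A * A)),
       junk2 d sigma (PiF2 d sigma th
                      - \sum_(q <- p) PiF2 d sigma (mul1 q.1 q.2)))
  /\
  (forall (a b : 'I_3 -> A) (w v : seq (A * A)),
     PiF1 d sigma w = \sum_(i < 3) (a i)%:M *m @sig_hat A N sigma i ->
     PiF1 d sigma v = \sum_(j < 3) (b j)%:M *m @sig_hat A N sigma j ->
     junk2 d sigma
       (PiF2 d sigma (mul1 w v)
        - \sum_(i < 3) \sum_(j < 3 | (i < j)%N)
            (a i * b j - a j * b i)%:M *m (@sig_hat A N sigma i *m @sig_hat A N sigma j))).
Proof.
case=> [[_ starD starZ _] starS _ _].
case=> [[dlin dmul dstar] dS0 dS1 dS2] sc.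
split.
  move=> th; exists [seq ([:: (x.1.1, x.1.2)], [:: (1, x.2)]) | x <- th].
  have E1 : forall x, PiF2 d sigma (mul1 [:: (x.1.1, x.1.2)] [:: (1, x.2)]) = Pi2 d sigma x.
    move=> x; rewrite (@PiF2_mul1 A N d sigma dmul) /PiF1 !big_seq1 /Pi1 /Pi2 /=.
    by rewrite mul1mx.
  rewrite big_map; under eq_bigr => x _ do rewrite /= E1.
  rewrite -/(PiF2 d sigma th).
  rewrite subrr; exists [::]; split; by rewrite /PiF1 /PiF2 /delta1 /= big_nil.
move=> a b w v hw hv.
rewrite (@PiF2_mul1 A N d sigma dmul) hw hv (@part2_alg A N sigma sc).
exact: (@junk_sc A N d sigma dmul star S starS starD starZ dstar dS0 dS1 dS2 sc).
Qed.
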